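(* For all integers $n\ge0$ and $j$ with $0\le 2j\le n$, $$f(n,j)=\sum_{i=0}^{j}p(i)\,p(j-i,\,n-2j).$$ Equivalently, the set of partitions $\lambda$ of $n$ with $a_2+a_4+\dots=j$ is in bijection with the set of ordered pairs of partitions $(\alpha,\beta)$ with $|\alpha|+|\beta|=j$ and $\beta$ having at most $n-2j$ parts; such a bijection is given by $\lambda=(a_1,\dots,a_r)\mapsto(\alpha,\beta)$ with $\alpha=(1^{a_2-a_3}2^{a_4-a_5}3^{a_6-a_7}\cdots)$ and $\beta=(1^{a_3-a_4}2^{a_5-a_6}3^{a_7-a_8}\cdots)$, where $a_i=0$ for $i>r$ and $k^{e}$ denotes $e$ copies of the part $k$.
   Context: A partition $\lambda$ of $n$ is written $n=a_1+\dots+a_r$ with $a_1\ge\dots\ge a_r\ge1$. $f(n,j)$ denotes the number of partitions of $n$ with $a_2+a_4+a_6+\dots=j$. $p(i)$ is the number of partitions of $i$ ($p(0)=1$), and $p(N,k)$ is the number of partitions of $N$ into at most $k$ parts ($p(0,k)=1$ for $k\ge0$). *)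

(* Defs.v *)
From mathcomp Require Import all_boot.
Set Implicit Arguments. Unset Strict Implicit. Unset Printing Implicit Defensive.

(* A partition is a seq nat a_1 >= a_2 >= ... >= a_r >= 1 (a_1 first). *)
Definition is_partition (n : nat) (s : seq nat) : bool :=
  [&& sorted geq s, all (fun a => 0 < a) s & sumn s == n].

Fixpoint seqs_len (m k : nat) : seq (seq nat) :=
  match k with
  | 0 => [:: [::]]
  | k'.+1 => [seq a :: t | a <- iota 1 m, t <- seqs_len m k']
  end.

(* Candidate sequences: lengths 0..n, entries in 1..n (contains every partition of n). *)
Definition candidates (n : nat) : seq (seq nat) :=
  flatten [seq seqs_len n k | k <- iota 0 n.+1].

Definition partitions (n : nat) : seq (seq nat) :=
  filter (is_partition n) (candidates n).

(* a_2 + a_4 + a_6 + ... (1-based even positions = 0-based odd positions) *)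
Fixpoint evsum (s : seq nat) : nat :=
  match s with
  | _ :: b :: t => b + evsum t
  | _ => 0
  end.

Definition p (i : nat) : nat := size (partitions i).

Definition pk (N k : nat) : nat := count (fun s => size s <= k) (partitions N).

Definition f (n j : nat) : nat := count (fun s => evsum s == j) (partitions n).

(* Main.v *)
Require Import Defs.
From mathcomp Require Import all_boot zify.
Set Implicit Arguments. Unset Strict Implicit. Unset Printing Implicit Defensive.

Fixpoint sm (F : nat -> nat) (N : nat) : nat := if N is N'.+1 then sm F N' + F N' else 0.

Lemma sm_ext F G N : (forall i, i < N -> F i = G i) -> sm F N = sm G N.
Proof. elim: N => //= N IH H; rewrite IH ?H // => i Hi; apply: H; lia. Qed.

Lemma sm_add F G N : sm (fun i => F i + G i) N = sm F N + sm G N.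
Proof. elim: N => //= N ->; lia. Qed.

Lemma sm_shift F N : sm F N.+1 = F 0 + sm (fun i => F i.+1) N.
Proof. elim: N => [|N IH] /=; first lia. move: IH => /= ->; lia. Qed.

Lemma sm_widen F K N : K <= N -> (forall i, K <= i -> F i = 0) -> sm F N = sm F K.
Proof.
elim: N => [|N IH] HK H0; first by rewrite leqn0 in HK; move/eqP: HK => ->.
case: (ltnP K N.+1) => h.
  rewrite /= IH ?H0 //; lia.
have -> : K = N.+1 by lia. by [].
Qed.

Lemma sm_eo F M : sm F M.*2 = sm (fun t => F t.*2 + F t.*2.+1) M.
Proof. elim: M => // M IH. rewrite doubleS /= IH; lia. Qed.

Lemma sm_tele G N : G N = 0 -> sm (fun i => G i + G i.+1) N = G 0 + 2 * sm (fun i => G i.+1) N.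
Proof.
move=> HN. rewrite sm_add.
have h1 := sm_shift G N. move: h1 => /=. rewrite HN => h1. lia.
Qed.

Lemma sm_zero F N : (forall i, F i = 0) -> sm F N = 0.
Proof. move=> H; elim: N => //= N ->; rewrite H. by []. Qed.

Lemma sm_lt x H : sm (fun t => t < x) H = minn x H.
Proof. elim: H => [|H IH] /=; first by rewrite minn0. rewrite IH. case: (ltnP H x) => h /=; lia. Qed.

Lemma sumn_sm s N : size s <= N -> sumn s = sm (nth 0 s) N.
Proof.
elim: s N => [|x s IH] [|N] // H.
  by rewrite sm_zero // => i; rewrite nth_nil.
rewrite (sm_shift (nth 0 (x :: s))) /= (IH N) //.
Qed.
Lemma evsum_sm s M : size s <= M.*2 -> evsum s = sm (fun t => nth 0 s t.*2.+1) M.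
Proof.
elim: M s => [|M IH] [|x [|y t]] // H.
- by rewrite sm_zero // => i; rewrite nth_nil.
- by rewrite sm_zero // => i; rewrite /= nth_nil.
- rewrite doubleS in H.
  rewrite (sm_shift (fun t0 => nth 0 [:: x, y & t] t0.*2.+1)) /=.
  rewrite (IH t); last by move: H => /=; lia.
  congr (_ + _); apply: sm_ext => i _ /=; by rewrite ?doubleS.
Qed.

Definition dec (F : nat -> nat) := forall i, F i.+1 <= F i.

Lemma dec_le F : dec F -> forall i k, i <= k -> F k <= F i.
Proof.
move=> H i k; elim: k => [|k IH]; first by rewrite leqn0 => /eqP ->.
rewrite leq_eqVlt => /orP [/eqP -> //| h]. apply: leq_trans (H k) (IH h).
Qed.

Fixpoint mk (F : nat -> nat) (B : nat) : seq nat :=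
  if B is B'.+1 then (if 0 < F 0 then F 0 :: mk (fun i => F i.+1) B' else [::]) else [::].

Lemma mk_nth F B : dec F -> (forall i, B <= i -> F i = 0) -> forall i, nth 0 (mk F B) i = F i.
Proof.
elim: B F => [|B IH] F Hd Hz i /=.
  by rewrite nth_nil Hz.
case: ifP => h.
  case: i => [|i] //=. apply: IH => // k hk. apply: Hz. lia.
have : F i <= F 0 by apply: dec_le.
rewrite nth_nil. lia.
Qed.

Lemma mk_path F B x : dec F -> F 0 <= x -> path geq x (mk F B).
Proof.
elim: B F x => [|B IH] F x Hd Hx //=.
case: ifP => // _ /=. rewrite Hx /=. apply: IH => //; exact: Hd.
Qed.

Lemma mk_sorted F B : dec F -> sorted geq (mk F B).
Proof.
move=> Hd; case: B => [|B] //=. case: ifP => // _ /=. apply: mk_path => //; exact: Hd.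
Qed.

Lemma mk_pos F B : all (fun a => 0 < a) (mk F B).
Proof. elim: B F => [|B IH] F //=. case: ifP => //= ->. exact: IH. Qed.

Lemma mk_size F B : size (mk F B) <= B.
Proof. elim: B F => [|B IH] F //=. case: ifP => //= _. exact: IH. Qed.

Lemma pos_eq s t : all (fun a => 0 < a) s -> all (fun a => 0 < a) t ->
  (forall i, nth 0 s i = nth 0 t i) -> s = t.
Proof.
move=> Hs Ht H.
have Hsz : size s = size t.
  apply/eqP; rewrite eqn_leq; apply/andP; split; rewrite leqNgt; apply/negP => lt.
  - move/all_nthP: Hs => /(_ 0 _ lt). by rewrite H nth_default.
  - move/all_nthP: Ht => /(_ 0 _ lt). by rewrite -H nth_default.
by apply: (eq_from_nth (x0:=0)) => // i _.
Qed.

Lemma size_le_sumn s : all (fun a => 0 < a) s -> size s <= sumn s.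
Proof. elim: s => //= x s IH /andP [h1 h2]. have := IH h2. lia. Qed.

Lemma mem_le_sumn s x : x \in s -> x <= sumn s.
Proof.
elim: s => //= y s IH. rewrite in_cons => /orP [/eqP ->| h]; first lia.
have := IH h. lia.
Qed.

Lemma sorted_dec s : sorted geq s -> dec (nth 0 s).
Proof.
elim: s => [|x s IH] /= H i; first by rewrite !nth_nil.
case: i => [|i] /=.
  by case: s H {IH} => //= y s /andP [].
apply: IH. exact: path_sorted H.
Qed.

Lemma nth_le_head s i : sorted geq s -> nth 0 s i <= nth 0 s 0.
Proof. move=> H; apply: dec_le => //; exact: sorted_dec. Qed.

Fixpoint altsum (s : seq nat) : nat := if s is x :: t then x - altsum t else 0.
Definition g (s : seq nat) (i : nat) := altsum (drop i s).

Lemma altsum_le s : altsum s <= nth 0 s 0.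
Proof. case: s => //= x t. exact: leq_subr. Qed.

Lemma g_rel s i : sorted geq s -> g s i + g s i.+1 = nth 0 s i.
Proof.
move=> Hs. rewrite /g. case: (ltnP i (size s)) => h.
  rewrite (drop_nth 0 h) /=. rewrite subnK //.
  apply: leq_trans (altsum_le _) _. rewrite nth_drop addn0.
  exact: sorted_dec.
by rewrite !drop_oversize ?nth_default //; lia.
Qed.

Lemma g_zero s i : size s <= i -> g s i = 0.
Proof. by move=> h; rewrite /g drop_oversize. Qed.

Lemma g_dec2 s i : sorted geq s -> g s i.+2 <= g s i.
Proof.
move=> Hs. have h1 := g_rel i Hs. have h2 := g_rel i.+1 Hs.
have h3 := sorted_dec Hs i. lia.
Qed.

Lemma geq_trans : transitive geq.
Proof. move=> a b c /= h1 h2. exact: leq_trans h2 h1. Qed.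

Lemma count_lt_nth s t i : sorted geq s ->
  (i < count (fun a => t < a) s) = (t < nth 0 s i).
Proof.
elim: s i => [|x s IH] i Hs /=; first by rewrite nth_nil.
have Hs' : sorted geq s := path_sorted Hs.
case: (ltnP t x) => h /=.
  case: i => [|i] //=. by rewrite add1n ltnS IH.
have -> : count (fun a => t < a) s = 0.
  apply/eqP. rewrite -leqn0 leqNgt -has_count. apply/hasP => [[a Ha Hta]].
  have := order_path_min geq_trans Hs. move/allP/(_ a Ha) => /= hax. lia.
have := nth_le_head i Hs. rewrite /=. lia.
Qed.

Lemma count_mk (p : pred nat) F B : ~~ p 0 -> dec F ->
  count p (mk F B) = sm (fun t => p (F t)) B.
Proof.
elim: B F => [|B IH] F Hp Hd //=.
case: ifP => h /=.
  have Hd' : dec (fun i => F i.+1) by move=> i; exact: Hd.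
  rewrite IH //.
  by move: (sm_shift (fun t => p (F t)) B) => /= ->.
have Fz : forall i, F i = 0.
  move=> i; have := dec_le Hd (leq0n i). lia.
rewrite Fz sm_zero => [|i]; rewrite ?Fz; by case: (p 0) Hp.
Qed.

Definition conj (s : seq nat) := mk (fun t => count (fun a => t < a) s) (nth 0 s 0).

Lemma conj_dec s : dec (fun t => count (fun a => t < a) s).
Proof. move=> t. apply: sub_count => a /=. lia. Qed.

Lemma conj_nth s : sorted geq s -> forall t, nth 0 (conj s) t = count (fun a => t < a) s.
Proof.
move=> Hs t. apply: mk_nth; first exact: conj_dec.
move=> i hi. apply/eqP. rewrite -leqn0 leqNgt count_lt_nth //. lia.
Qed.

Lemma conj_conj s : sorted geq s -> all (fun a => 0 < a) s -> conj (conj s) = s.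
Proof.
move=> Hs Hp. apply: pos_eq => //; first exact: mk_pos.
move=> i. rewrite conj_nth; last by apply: mk_sorted; exact: conj_dec.
rewrite /conj count_mk //; last exact: conj_dec.
rewrite (sm_ext (G := fun t => t < nth 0 s i)); last by move=> t _; rewrite count_lt_nth.
rewrite sm_lt. have := nth_le_head i Hs. lia.
Qed.

Lemma sm_count s H : (forall a, a \in s -> a <= H) ->
  sm (fun t => count (fun a => t < a) s) H = sumn s.
Proof.
elim: s => [|x s IH] Hle /=; first by rewrite sm_zero.
rewrite sm_add sm_lt IH; last by move=> a Ha; apply: Hle; rewrite in_cons Ha orbT.
have := Hle x (mem_head _ _). lia.
Qed.

Lemma conj_sumn s : sorted geq s -> sumn (conj s) = sumn s.
Proof.
move=> Hs. rewrite (sumn_sm (N := nth 0 s 0)); last exact: mk_size.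
rewrite (sm_ext (G := fun t => count (fun a => t < a) s)); last by move=> t _; rewrite conj_nth.
apply: sm_count => a Ha. rewrite -(nth_index 0 Ha). exact: nth_le_head.
Qed.

Lemma conj_head s : sorted geq s -> all (fun a => 0 < a) s -> nth 0 (conj s) 0 = size s.
Proof.
move=> Hs Hp. rewrite conj_nth //. apply/eqP. by rewrite -all_count.
Qed.

Lemma pos_size_nth u k : all (fun a => 0 < a) u -> (size u <= k) = (nth 0 u k == 0).
Proof.
move=> Hp. case: (leqP (size u) k) => h. by rewrite nth_default.
move/all_nthP: Hp => /(_ 0 k h). case: (nth 0 u k) => //.
Qed.

Lemma conj_size s k : sorted geq s -> all (fun a => 0 < a) s ->
  (size (conj s) <= k) = (nth 0 s 0 <= k).
Proof.
move=> Hs Hp. rewrite pos_size_nth; last exact: mk_pos.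
rewrite conj_nth // -leqn0 leqNgt (count_lt_nth _ _ Hs). by rewrite -leqNgt.
Qed.

Lemma mem_seqs_len m k s :
  (s \in seqs_len m k) = (size s == k) && all (fun a => 0 < a <= m) s.
Proof.
elim: k s => [|k IH] s /=; first by case: s.
apply/allpairsPdep/idP.
  move=> [a [t [Ha Ht ->]]]. rewrite /= IH in Ht. rewrite mem_iota in Ha.
  move/andP: Ht => [/eqP Hs Hall]. rewrite /= Hs Hall eqxx andbT. lia.
case: s => [|a t] //= /andP [/eqP [] Hs /andP [Ha Ht]].
exists a, t; split => //; first by rewrite mem_iota; lia.
by rewrite IH Hs eqxx.
Qed.

Lemma uniq_seqs_len m k : uniq (seqs_len m k).
Proof.
elim: k => [|k IH] //=.
apply: allpairs_uniq_dep => //; first exact: iota_uniq.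
by move=> [a t] [b u] _ _ /= [-> ->].
Qed.

Lemma mem_candidates n s :
  (s \in candidates n) = (size s <= n) && all (fun a => 0 < a <= n) s.
Proof.
apply/flattenP/idP.
  move=> [l /mapP [k Hk ->]]. rewrite mem_seqs_len => /andP [/eqP Hs ->].
  rewrite mem_iota in Hk. rewrite andbT. lia.
move=> /andP [Hs Ha]. exists (seqs_len n (size s)).
  apply/mapP. exists (size s) => //. rewrite mem_iota. lia.
by rewrite mem_seqs_len eqxx.
Qed.

Lemma uniq_flat (T U : eqType) (F : T -> seq U) (key : U -> T) s :
  uniq s -> (forall x, uniq (F x)) -> (forall x y, y \in F x -> key y = x) ->
  uniq (flatten (map F s)).
Proof.
move=> Hs HF Hk. elim: s Hs => [|x s IH] //= /andP [Hx Hs].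
rewrite cat_uniq HF IH // andbT /=. apply/hasP => [[y /flattenP [l /mapP [x' Hx' ->]] Hy Hy']].
have e1 := Hk _ _ Hy. have e2 := Hk _ _ Hy'. rewrite -e2 e1 in Hx.
by rewrite Hx' in Hx.
Qed.

Lemma uniq_candidates n : uniq (candidates n).
Proof.
apply: (uniq_flat (key := size)); first exact: iota_uniq.
  exact: uniq_seqs_len.
by move=> k t; rewrite mem_seqs_len => /andP [/eqP].
Qed.

Lemma mem_partitions n s : (s \in partitions n) = is_partition n s.
Proof.
rewrite mem_filter mem_candidates. case H: (is_partition n s) => //=.
move/and3P: H => [_ Hp /eqP Hn]. apply/andP; split.
  rewrite -Hn. exact: size_le_sumn.
apply/allP => a Ha. move/allP: Hp => /(_ a Ha) -> /=. rewrite -Hn. exact: mem_le_sumn.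
Qed.

Lemma uniq_partitions n : uniq (partitions n).
Proof. apply: filter_uniq. exact: uniq_candidates. Qed.

Lemma bij_size (T U : eqType) (A : seq T) (B : seq U) (f : T -> U) (h : U -> T) :
  uniq A -> uniq B -> {in A, forall x, f x \in B} -> {in B, forall y, h y \in A} ->
  {in A, cancel f h} -> {in B, cancel h f} -> size A = size B.
Proof.
move=> uA uB fA hB fK hK.
apply/eqP; rewrite eqn_leq; apply/andP; split.
  rewrite -(size_map f A). apply: uniq_leq_size.
    rewrite map_inj_in_uniq // => x y Hx Hy E. by rewrite -(fK x Hx) E fK.
  move=> y /mapP [x Hx ->]. exact: fA.
rewrite -(size_map h B). apply: uniq_leq_size.
  rewrite map_inj_in_uniq // => x y Hx Hy E. by rewrite -(hK x Hx) E hK.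
move=> y /mapP [x Hx ->]. exact: hB.
Qed.

Lemma pk_head N k : pk N k = count (fun s => nth 0 s 0 <= k) (partitions N).
Proof.
rewrite /pk -!size_filter.
apply: (bij_size (f := conj) (h := conj)); try (apply: filter_uniq; exact: uniq_partitions).
- move=> s; rewrite !(mem_filter _ _ (partitions N)) mem_partitions => /andP [Hk /and3P [Hs Hp /eqP Hn]].
  rewrite conj_head // Hk mem_partitions /is_partition mk_sorted ?mk_pos ?conj_sumn ?Hn ?eqxx //.
  exact: conj_dec.
- move=> s; rewrite !(mem_filter _ _ (partitions N)) mem_partitions => /andP [Hk /and3P [Hs Hp /eqP Hn]].
  rewrite conj_size // Hk mem_partitions /is_partition mk_sorted ?mk_pos ?conj_sumn ?Hn ?eqxx //.
  exact: conj_dec.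
- move=> s; rewrite (mem_filter _ _ (partitions N)) mem_partitions => /andP [_ /and3P [Hs Hp _]].
  exact: conj_conj.
- move=> s; rewrite (mem_filter _ _ (partitions N)) mem_partitions => /andP [_ /and3P [Hs Hp _]].
  exact: conj_conj.
Qed.

Lemma uniq_fun (h H : nat -> nat) B : (forall i, h i + h i.+1 = H i + H i.+1) ->
  (forall i, B <= i -> h i = 0) -> (forall i, B <= i -> H i = 0) -> forall i, h i = H i.
Proof.
move=> Hr Hh HH.
suff: forall k i, B - i <= k -> h i = H i by move=> S i; apply: (S (B - i)).
elim=> [|k IH] i Hi.
  rewrite Hh ?HH //; lia.
case: (leqP B i) => hb; first by rewrite Hh ?HH.
have := IH i.+1 ltac:(lia). have := Hr i. lia.
Qed.

Lemma parity_ind (P : nat -> Prop) : (forall t, P t.*2.+1) -> (forall t, P t.*2.+2) ->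
  forall i, P i.+1.
Proof.
move=> H1 H2 i. rewrite -(odd_double_half i). case: (odd i) => /=.
  rewrite add1n. exact: H2.
rewrite add0n. exact: H1.
Qed.

Definition Gf (c : nat) (ga de : seq nat) (i : nat) :=
  if i is i'.+1 then (if odd i' then nth 0 de i'./2 else nth 0 ga i'./2) else c.

Lemma Gf_ev c ga de t : Gf c ga de t.*2.+1 = nth 0 ga t.
Proof. by rewrite /= odd_double doubleK. Qed.

Lemma Gf_od c ga de t : Gf c ga de t.*2.+2 = nth 0 de t.
Proof. by rewrite /= odd_double /= uphalf_double. Qed.

Lemma Gf_dec2 c ga de : sorted geq ga -> sorted geq de -> nth 0 de 0 <= c ->
  forall i, Gf c ga de i.+2 <= Gf c ga de i.
Proof.
move=> Hg Hd Hc [|i] //=. rewrite negbK. case: (odd i) => /=.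
  exact: sorted_dec.
exact: sorted_dec.
Qed.

Lemma Gf_zero c ga de K : size ga <= K -> size de <= K ->
  forall i, K.*2.+1 <= i -> Gf c ga de i = 0.
Proof.
move=> Hg Hd [|i] //= Hi. have := odd_double_half i.
case: (odd i) => /= E; rewrite nth_default //; rewrite -!muln2 in E; lia.
Qed.

Definition Phi (n : nat) (l : seq nat) :=
  (mk (fun t => g l t.*2.+1) n, mk (fun t => g l t.*2.+2) n).

Definition Psi (n c : nat) (p : seq nat * seq nat) :=
  mk (fun i => Gf c p.1 p.2 i + Gf c p.1 p.2 i.+1) n.+1.

Section Main.
Variables n j : nat.
Hypothesis Hnj : 2 * j <= n.
Let c := n - 2 * j.

Lemma Phi_nth l : sorted geq l -> size l <= n.+1 ->
  (forall t, nth 0 (Phi n l).1 t = g l t.*2.+1) /\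
  (forall t, nth 0 (Phi n l).2 t = g l t.*2.+2).
Proof.
move=> Hs Hz. split => t; apply: mk_nth.
- move=> i. rewrite doubleS. exact: g_dec2.
- move=> i hi. apply: g_zero. rewrite -muln2. lia.
- move=> i. rewrite doubleS. exact: g_dec2.
- move=> i hi. apply: g_zero. rewrite -muln2. lia.
Qed.

Lemma g_sums l N : sorted geq l -> size l <= N ->
  sumn l = g l 0 + 2 * sm (fun i => g l i.+1) N /\ evsum l = sm (fun i => g l i.+1) N.
Proof.
move=> Hs Hz. split.
  rewrite (sumn_sm Hz) (sm_ext (G := fun i => g l i + g l i.+1)); last by move=> i _; rewrite g_rel.
  by rewrite sm_tele // g_zero.
rewrite (evsum_sm (M := N)); last by rewrite -muln2; lia.
rewrite (sm_ext (G := fun t => g l t.*2.+1 + g l t.*2.+2)); last by move=> i _; rewrite g_rel.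
rewrite -(sm_eo (fun i => g l i.+1)). apply: sm_widen; first by rewrite -muln2; lia.
move=> i hi. apply: g_zero. lia.
Qed.

Definition Rb (p : seq nat * seq nat) :=
  [&& is_partition (sumn p.1) p.1, is_partition (sumn p.2) p.2,
      sumn p.1 + sumn p.2 == j & nth 0 p.2 0 <= c].

Definition Lb (l : seq nat) := is_partition n l && (evsum l == j).

Lemma Phi_R l : Lb l -> Rb (Phi n l).
Proof.
move=> /andP [/and3P [Hs Hp /eqP Hn] /eqP Hj].
have Hz : size l <= n by rewrite -Hn; exact: size_le_sumn.
have [H1 H2] := Phi_nth Hs ltac:(lia).
have [S1 S2] := g_sums Hs Hz.
have Dg1 : dec (fun t => g l t.*2.+1) by move=> i; rewrite doubleS; exact: g_dec2.
have Dg2 : dec (fun t => g l t.*2.+2) by move=> i; rewrite doubleS; exact: g_dec2.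
apply/and4P; split.
- by rewrite /is_partition mk_sorted // mk_pos eqxx.
- by rewrite /is_partition mk_sorted // mk_pos eqxx.
- rewrite (sumn_sm (N := n) (mk_size _ _)) (sumn_sm (N := n) (mk_size _ _)).
  rewrite -sm_add (sm_ext (G := fun t => g l t.*2.+1 + g l t.*2.+2)); last by move=> i _; rewrite H1 H2.
  rewrite -(sm_eo (fun i => g l i.+1)) (sm_widen (K := n)); last first.
  + move=> i hi. apply: g_zero. lia.
  + rewrite -muln2; lia.
  by rewrite -S2 Hj.
- rewrite H2 double0 /c. have := g_rel 0 Hs. have := g_rel 1 Hs. have := sorted_dec Hs 0. lia.
Qed.

Lemma Psi_facts ga de : Rb (ga, de) ->
  [/\ dec (fun i => Gf c ga de i + Gf c ga de i.+1), forall i, n.+1 <= i -> Gf c ga de i = 0,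
      forall i, nth 0 (Psi n c (ga, de)) i = Gf c ga de i + Gf c ga de i.+1 &
      forall N, j.*2 <= N -> sm (fun i => Gf c ga de i.+1) N = j].
Proof.
move=> /and4P [/and3P [Hg Hgp _] /and3P [Hd Hdp _] /eqP Hs Hc].
simpl in Hg, Hgp, Hd, Hdp, Hs, Hc.
have Zg : size ga <= j by apply: leq_trans (size_le_sumn Hgp) _; lia.
have Zd : size de <= j by apply: leq_trans (size_le_sumn Hdp) _; lia.
have Dec : dec (fun i => Gf c ga de i + Gf c ga de i.+1).
  move=> i. have := Gf_dec2 Hg Hd Hc i. lia.
have Zero : forall i, n.+1 <= i -> Gf c ga de i = 0.
  move=> i hi. apply: (Gf_zero c Zg Zd). rewrite -muln2. lia.
split => //.
- apply: mk_nth => // i hi. rewrite !Zero //; lia.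
- move=> N HN. rewrite (sm_widen (K := j.*2)) //; last first.
    move=> i hi. apply: (Gf_zero c Zg Zd). lia.
  rewrite sm_eo (sm_ext (G := fun t => nth 0 ga t + nth 0 de t)); last first.
    by move=> t _; rewrite Gf_ev Gf_od.
  by rewrite sm_add -!sumn_sm.
Qed.

Lemma Psi_L p : Rb p -> Lb (Psi n c p).
Proof.
case: p => ga de HR. have [Dec Zero Nth Sm] := Psi_facts HR.
have Zl : size (Psi n c (ga, de)) <= n.+1 by exact: mk_size.
apply/andP; split; first (apply/and3P; split).
- exact: mk_sorted.
- exact: mk_pos.
- rewrite (sumn_sm Zl) (sm_ext (G := fun i => Gf c ga de i + Gf c ga de i.+1)); last by move=> i _; rewrite Nth.
  rewrite sm_tele; last by rewrite Zero.
  rewrite Sm; last by rewrite -muln2; lia.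
  rewrite /= /c. apply/eqP. lia.
- rewrite (evsum_sm (M := n.+1)); last by rewrite -muln2; lia.
  rewrite (sm_ext (G := fun t => Gf c ga de t.*2.+1 + Gf c ga de t.*2.+2)); last by move=> i _; rewrite Nth.
  rewrite -(sm_eo (fun i => Gf c ga de i.+1)) Sm //. rewrite -!muln2; lia.
Qed.

Lemma Psi_Phi l : Lb l -> Psi n c (Phi n l) = l.
Proof.
move=> HL. have HR := Phi_R HL. case E: (Phi n l) HR => [ga de] HR.
have [Dec Zero Nth Sm] := Psi_facts HR.
move: HL => /andP [/and3P [Hs Hp /eqP Hn] /eqP Hj].
have Hz : size l <= n by rewrite -Hn; exact: size_le_sumn.
have [H1 H2] := Phi_nth Hs ltac:(lia).
have [S1 S2] := g_sums Hs Hz.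
rewrite E /= in H1 H2.
have EG : forall i, Gf c ga de i = g l i.
  case=> [|i]. rewrite /= /c. lia.
  apply: (parity_ind (P := fun i => Gf c ga de i = g l i)) => t.
    by rewrite Gf_ev H1.
  by rewrite Gf_od H2.
apply: pos_eq => //; first exact: mk_pos.
move=> i. by rewrite Nth !EG g_rel.
Qed.

Lemma Phi_Psi p : Rb p -> Phi n (Psi n c p) = p.
Proof.
case: p => ga de HR. have [Dec Zero Nth Sm] := Psi_facts HR.
have HL := Psi_L HR.
set l := Psi n c (ga, de).
have Zl : size l <= n.+1 by exact: mk_size.
have Hs : sorted geq l by exact: mk_sorted.
have [H1 H2] := Phi_nth Hs Zl.
have Eg : forall i, g l i = Gf c ga de i.
  apply: (uniq_fun (B := n.+1)) => //.
  - move=> i. by rewrite g_rel // Nth.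
  - move=> i hi. apply: g_zero. lia.
move: HR => /and4P [/and3P [_ Hgp _] /and3P [_ Hdp _] _ _].
congr (_, _); apply: pos_eq => //; try exact: mk_pos.
  by move=> t; rewrite H1 Eg Gf_ev.
by move=> t; rewrite H2 Eg Gf_od.
Qed.

End Main.

Lemma mem_R n j (Hnj : 2 * j <= n) (q : seq nat * seq nat) :
  (q \in flatten [seq [seq (x, y) | x <- partitions i,
       y <- [seq d <- partitions (j - i) | nth 0 d 0 <= n - 2 * j]] | i <- iota 0 j.+1])
  = Rb n j q.
Proof.
apply/flattenP/idP.
  move=> [l /mapP [i Hi ->]] /allpairsP [[x y] [/= Hx Hy ->]].
  rewrite mem_partitions in Hx. rewrite mem_filter mem_partitions in Hy.
  move: Hx Hy => /and3P [Hx1 Hx2 /eqP Hx3] /andP [Hc /and3P [Hy1 Hy2 /eqP Hy3]].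
  rewrite mem_iota in Hi.
  rewrite /Rb /= /is_partition Hx1 Hx2 Hy1 Hy2 Hc !eqxx /=. apply/eqP. lia.
case: q => x y /and4P [Hx Hy /eqP Hs Hc]. simpl in Hx, Hy, Hs, Hc.
exists [seq (x0, y0) | x0 <- partitions (sumn x),
       y0 <- [seq d <- partitions (j - sumn x) | nth 0 d 0 <= n - 2 * j]].
  apply/mapP. exists (sumn x) => //. rewrite mem_iota. lia.
apply/allpairsP. exists (x, y); split => //=.
  by rewrite mem_partitions.
rewrite mem_filter mem_partitions Hc /=. have -> : j - sumn x = sumn y by lia.
by [].
Qed.

Theorem mainTheorem2 (n j : nat) :
  2 * j <= n ->
  f n j = \sum_(0 <= i < j.+1) p i * pk (j - i) (n - 2 * j).
Proof.
move=> Hnj.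
set R := flatten [seq [seq (x, y) | x <- partitions i,
       y <- [seq d <- partitions (j - i) | nth 0 d 0 <= n - 2 * j]] | i <- iota 0 j.+1].
have ER : \sum_(0 <= i < j.+1) p i * pk (j - i) (n - 2 * j) = size R.
  rewrite /R size_flatten /shape -map_comp sumnE big_map /index_iota subn0.
  apply: eq_bigr => i _. by rewrite /= size_allpairs size_filter pk_head.
rewrite ER /f -size_filter.
apply: (bij_size (f := Phi n) (h := Psi n (n - 2 * j))).
- apply: filter_uniq. exact: uniq_partitions.
- apply: (uniq_flat (key := fun q => sumn q.1)); first exact: iota_uniq.
    move=> i. apply: allpairs_uniq; first exact: uniq_partitions.
      apply: filter_uniq. exact: uniq_partitions.
    by move=> [a b] [a' b'] _ _ /= [-> ->].
  move=> i [x y] /allpairsP [[x' y'] [/= Hx _ [-> _]]].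
  by move: Hx; rewrite mem_partitions => /and3P [_ _ /eqP].
- move=> l. rewrite mem_filter mem_partitions andbC => HL.
  rewrite (mem_R Hnj). exact: Phi_R.
- move=> q. rewrite (mem_R Hnj) => HR.
  rewrite mem_filter mem_partitions andbC. exact: Psi_L.
- move=> l. rewrite mem_filter mem_partitions andbC => HL. exact: Psi_Phi.
- move=> q. rewrite (mem_R Hnj) => HR. exact: Phi_Psi.
Qed.
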